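(* Let $f:\mathbb{R}^n_{>0}\to\mathbb{R}^n_{>0}$ be order-preserving and homogeneous. Then $\delta(f)=\log r(f)-\log\lambda(f)$, where $\delta(f)=\inf\{d_H(x,f(x)):x\in\mathbb{R}^n_{>0}\}$.
   Context: Entrywise order. Order-preserving: $x\le y\Rightarrow f(x)\le f(y)$; homogeneous: $f(tx)=tf(x)$ for $t>0$. $d_H(x,y)=\log\max_{i,j}\frac{y_ix_j}{x_iy_j}$. $r(f)=\inf_{x\in\mathbb{R}^n_{>0}}\max_if(x)_i/x_i$ and $\lambda(f)=\sup_{x\in\mathbb{R}^n_{>0}}\min_if(x)_i/x_i$ are the upper and lower Collatz–Wielandt numbers. *)

(* Defs.v *)
From HB Require Import structures.
From mathcomp Require Import all_boot all_order all_algebra.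
From mathcomp Require Import all_classical all_reals all_analysis.
Set Implicit Arguments. Unset Strict Implicit. Unset Printing Implicit Defensive.
Import Order.TTheory GRing.Theory Num.Theory.
Local Open Scope ring_scope.
Local Open Scope classical_set_scope.

Section Defs.
Variables (R : realType) (n : nat).

Definition vec := 'I_n.+1 -> R.

Definition vpos (x : vec) : Prop := forall i, 0 < x i.

Definition vmax (F : 'I_n.+1 -> R) : R := \big[Num.max/F ord0]_(i < n.+1) F i.
Definition vmin (F : 'I_n.+1 -> R) : R := \big[Num.min/F ord0]_(i < n.+1) F i.

Definition order_preserving (f : vec -> vec) : Prop :=
  forall x y, vpos x -> vpos y -> (forall i, x i <= y i) -> forall i, f x i <= f y i.

Definition homogeneous (f : vec -> vec) : Prop :=
  forall (t : R) x, 0 < t -> vpos x -> f (fun i => t * x i) = (fun i => t * f x i).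

Definition dH (x y : vec) : R :=
  ln (vmax (fun i => vmax (fun j => (y i * x j) / (x i * y j)))).

Definition cw_upper (f : vec -> vec) : R :=
  inf [set vmax (fun i => f x i / x i) | x in vpos].
Definition cw_lower (f : vec -> vec) : R :=
  sup [set vmin (fun i => f x i / x i) | x in vpos].

Definition delta (f : vec -> vec) : R :=
  inf [set dH x (f x) | x in vpos].

End Defs.

(* Main.v *)
Require Import Defs.
From mathcomp Require Import all_boot all_order all_algebra.
From mathcomp Require Import all_classical all_reals all_analysis.
From mathcomp Require Import ring lra.
Import Order.TTheory GRing.Theory Num.Theory.
Local Open Scope ring_scope.

Module Aux.
Local Open Scope classical_set_scope.
Set Implicit Arguments. Unset Strict Implicit.

Section VM.
Variables (R : realType) (n : nat).
Implicit Types (F : 'I_n.+1 -> R).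

Lemma bmax_ge_seq (r : seq 'I_n.+1) x0 F i : i \in r ->
  F i <= \big[Num.max/x0]_(j <- r) F j.
Proof.
elim: r => // a r IH; rewrite in_cons big_cons => /orP [/eqP -> | /IH h].
  by rewrite le_max lexx.
by rewrite le_max h orbT.
Qed.

Lemma bmin_le_seq (r : seq 'I_n.+1) x0 F i : i \in r ->
  \big[Num.min/x0]_(j <- r) F j <= F i.
Proof.
elim: r => // a r IH; rewrite in_cons big_cons => /orP [/eqP -> | /IH h].
  by rewrite ge_min lexx.
by rewrite ge_min h orbT.
Qed.

Lemma vmax_ge F i : F i <= vmax F.
Proof. exact: bmax_ge_seq (mem_index_enum _). Qed.

Lemma vmin_le F i : vmin F <= F i.
Proof. exact: bmin_le_seq (mem_index_enum _). Qed.

Lemma vmax_le F c : (forall i, F i <= c) -> vmax F <= c.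
Proof.
move=> h; rewrite /vmax; apply: (big_ind (fun x => x <= c)) => //.
by move=> x y hx hy; rewrite ge_max hx hy.
Qed.

Lemma vmin_ge F c : (forall i, c <= F i) -> c <= vmin F.
Proof.
move=> h; rewrite /vmin; apply: (big_ind (fun x => c <= x)) => //.
by move=> x y hx hy; rewrite le_min hx hy.
Qed.

Lemma vmax_ex F : exists i, vmax F = F i.
Proof.
rewrite /vmax; apply: (big_ind (fun x => exists i, x = F i)).
- by exists ord0.
- move=> x y [i ->] [j ->]; case: (leP (F i) (F j)) => h.
    by exists j.
  by exists i.
- by move=> i _; exists i.
Qed.

Lemma vmin_ex F : exists i, vmin F = F i.
Proof.
rewrite /vmin; apply: (big_ind (fun x => exists i, x = F i)).
- by exists ord0.
- move=> x y [i ->] [j ->]; case: (leP (F i) (F j)) => h.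
    by exists i.
  by exists j.
- by move=> i _; exists i.
Qed.

End VM.

Section Add.
Variables (R : realType) (n : nat).
Local Notation T := ('I_n.+1 -> R).
Variable g : T -> T.
Hypothesis gmono : forall u v : T, (forall i, u i <= v i) -> forall i, g u i <= g v i.
Hypothesis gtrans : forall (u : T) c, g (fun i => u i + c) = (fun i => g u i + c).

Lemma gle {u v : T} {c : R} : (forall i, u i <= v i + c) -> forall i, g u i <= g v i + c.
Proof.
move=> h i; have := @gmono u (fun i => v i + c) h i.
by rewrite gtrans.
Qed.

Lemma gabs (u v : T) (d : R) : (forall i, `|u i - v i| <= d) -> forall i, `|g u i - g v i| <= d.
Proof.
move=> h i.
have h1 : forall j, u j <= v j + d.
  by move=> j; have := h j; rewrite ler_norml => /andP[]; lra.
have h2 : forall j, v j <= u j + d.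
  by move=> j; have := h j; rewrite ler_norml => /andP[]; lra.
have := gle h1 i; have := gle h2 i; rewrite ler_norml; lra.
Qed.

Lemma bernoulli (s : R) N : 0 <= s -> 1 + N%:R * s <= (1 + s) ^+ N.
Proof.
move=> s0; elim: N => [|N IH]; first by rewrite mul0r addr0 expr0.
rewrite exprS -natr1.
have h1 : 0 <= 1 + s by lra.
have := ler_wpM2l h1 IH.
have : 0 <= N%:R * s * s by rewrite mulr_ge0 // mulr_ge0.
nra.
Qed.

Lemma additive_main (u0 v : T) a b eta : 0 < eta ->
  (forall i, g u0 i <= u0 i + a) -> (forall i, v i + b <= g v i) ->
  exists w : T, forall i j, (g w i - w i) - (g w j - w j) <= a - b + eta.
Proof.
move=> eta0 hu hv.
pose d1 := vmax (fun i => `|g u0 i - u0 i|).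
pose d0 := vmin (fun i => u0 i - v i).
pose Mx := vmax (fun i => u0 i - v i).
have Osc0 : 0 <= Mx - d0.
  have := vmin_le (fun i => u0 i - v i) ord0.
  have := vmax_ge (fun i => u0 i - v i) ord0.
  rewrite -/d0 -/Mx; lra.
have d10 : 0 <= d1 by apply: le_trans (vmax_ge _ ord0).
pose s := eta / (2 * (Mx - d0 + 1)).
have s0 : 0 < s by rewrite divr_gt0 // mulr_gt0 //; lra.
have sOsc : s * (Mx - d0) <= eta / 2.
  have hs : s * (2 * (Mx - d0 + 1)) = eta.
    by rewrite /s divfK //; apply/negP => /eqP; lra.
  lra.
pose t := (1 + s)^-1.
have t0 : 0 < t by rewrite invr_gt0; lra.
have ht : t * (1 + s) = 1 by rewrite mulVf //; apply/negP => /eqP; lra.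
have t1 : t < 1 by nra.
have s0' : s != 0 by apply/negP => /eqP; lra.
have s1' : 1 + s != 0 by apply/negP => /eqP; lra.
pose K := 2 * d1 + `|a| + `|b|.
have K0 : 0 <= K by rewrite /K; have := normr_ge0 a; have := normr_ge0 b; lra.
have [N hN] : exists N, t ^+ N * K <= eta / 2.
  pose N := Num.Def.archi_bound (2 * K / (s * eta)).
  have hN : 2 * K / (s * eta) < N%:R.
    by apply: archi_boundP; apply: divr_ge0; [lra | apply: ltW; exact: mulr_gt0].
  exists N.
  have se : 0 < s * eta by rewrite mulr_gt0.
  have h2 : 2 * K <= N%:R * (s * eta).
    by rewrite -ler_pdivrMr //; apply: ltW.
  have hb := bernoulli N (ltW s0).
  have htN : t ^+ N * (1 + s) ^+ N = 1 by rewrite -exprMn ht expr1n.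
  have tN0 : 0 <= t ^+ N by rewrite exprn_ge0 // ltW.
  have : t ^+ N * (2 * K) <= t ^+ N * ((1 + s) ^+ N * eta).
    rewrite ler_wpM2l //.
    have := ler_wpM2r (ltW eta0) hb; lra.
  nra.
pose w := fun k => iter k (fun (x : T) => fun i => (1 - t) * u0 i + t * g x i) u0.
have wS : forall k i, w k.+1 i = (1 - t) * u0 i + t * g (w k) i by [].
have B1 : forall k i, w k i <= u0 i + (a / s + t ^+ k * `|a| / s).
  elim=> [|k IH] i.
    rewrite expr0 mul1r -mulrDl.
    have : 0 <= (a + `|a|) / s.
      by rewrite divr_ge0 ?(ltW s0) //; have := ler_norm (- a); rewrite normrN; lra.
    rewrite /=; lra.
  have hg := gle (IH) i.
  have hui := hu i.
  have e : t * (a + (a / s + t ^+ k * `|a| / s)) = a / s + t ^+ k.+1 * `|a| / s.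
    by rewrite exprS /t; field; rewrite s0' s1'.
  have : t * g (w k) i <= t * (u0 i + a + (a / s + t ^+ k * `|a| / s)).
    rewrite ler_pM2l //; lra.
  rewrite wS; lra.
have B2 : forall k i, v i + (d0 + b / s - t ^+ k * `|b| / s) <= w k i.
  have hd0 : forall i, v i + d0 <= u0 i.
    by move=> i; have := vmin_le (fun i => u0 i - v i) i; rewrite -/d0; lra.
  elim=> [|k IH] i.
    rewrite expr0 mul1r.
    have : (b - `|b|) / s <= 0.
      by rewrite pmulr_lle0 ?invr_gt0 //; have := ler_norm b; lra.
    rewrite mulrBl /=; have := hd0 i; lra.
  have IH' : forall j, v j <= w k j + - (d0 + b / s - t ^+ k * `|b| / s).
    by move=> j; have := IH j; lra.
  have hg := gle IH' i.
  have hvi := hv i.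
  have e : (1 - t) * d0 + t * (b + (d0 + b / s - t ^+ k * `|b| / s)) =
      d0 + b / s - t ^+ k.+1 * `|b| / s.
    by rewrite exprS /t; field; rewrite s0' s1'.
  have : t * (v i + b + (d0 + b / s - t ^+ k * `|b| / s)) <= t * g (w k) i.
    rewrite ler_pM2l //; lra.
  have : (1 - t) * (v i + d0) <= (1 - t) * u0 i.
    by rewrite ler_wpM2l ?hd0 //; lra.
  rewrite wS; lra.
have B3 : forall k i, `|w k.+1 i - w k i| <= t ^+ k.+1 * d1.
  elim=> [|k IH] i.
    have -> : w 1%N i - w 0%N i = t * (g u0 i - u0 i) by rewrite wS /=; ring.
    rewrite normrM gtr0_norm // expr1.
    have h := vmax_ge (fun i => `|g u0 i - u0 i|) i.
    have := ler_wpM2l (ltW t0) h; rewrite -/d1; lra.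
  have -> : w k.+2 i - w k.+1 i = t * (g (w k.+1) i - g (w k) i) by rewrite !wS; ring.
  rewrite normrM gtr0_norm // (exprS t k.+1).
  have h := gabs IH i; have := ler_wpM2l (ltW t0) h; lra.
exists (w N) => i j.
have tN0 : 0 <= t ^+ N by rewrite exprn_ge0 // ltW.
have up : g (w N) i - w N i <= a + t ^+ N * d1 + t ^+ N * `|a|.
  rewrite -(ler_pM2l t0).
  have := B3 N i; rewrite ler_norml => /andP [_ h3].
  have := B1 N i.
  move=> h1.
  have : (1 - t) * (w N i - u0 i) <= (1 - t) * (a / s + t ^+ N * `|a| / s).
    by rewrite ler_wpM2l //; lra.
  have e : (1 - t) * (a / s + t ^+ N * `|a| / s) = t * a + t * t ^+ N * `|a|.
    by rewrite /t; field; rewrite s0' s1'.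
  have := wS N i.
  rewrite exprS in h3.
  lra.
have lo : b - t ^+ N * d1 - s * (Mx - d0) - t ^+ N * `|b| <= g (w N) j - w N j.
  rewrite -(ler_pM2l t0).
  have := B3 N j; rewrite ler_norml => /andP [h3 _].
  have := B2 N j.
  move=> h2.
  have hM : u0 j - v j <= Mx by exact: (vmax_ge (fun i => u0 i - v i)).
  have : (1 - t) * (- Mx + d0 + b / s - t ^+ N * `|b| / s) <= (1 - t) * (w N j - u0 j).
    by rewrite ler_wpM2l //; lra.
  have e : (1 - t) * (- Mx + d0 + b / s - t ^+ N * `|b| / s) =
     t * (s * (d0 - Mx) + b - t ^+ N * `|b|).
    by rewrite /t; field; rewrite s0' s1'.
  have := wS N j.
  rewrite exprS in h3.
  lra.
have : t ^+ N * K = 2 * (t ^+ N * d1) + t ^+ N * `|a| + t ^+ N * `|b| by rewrite /K; ring.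
lra.
Qed.
End Add.

Lemma lnlt (R : realType) (x y : R) : 0 < x -> 0 < y -> (ln x <= ln y) = (x <= y).
Proof. by move=> hx hy; rewrite ler_ln ?posrE. Qed.

Lemma expfrac (R : realType) (p q r s : R) :
  expR p * expR q / (expR r * expR s) = expR (p + q - r - s).
Proof.
have h : expR (p + q - r - s) * (expR r * expR s) = expR p * expR q.
  by rewrite -!expRD; congr expR; ring.
rewrite -h mulfK //; apply/negP => /eqP.
have := mulr_gt0 (expR_gt0 r) (expR_gt0 s); lra.
Qed.

Section Main.
Variables (R : realType) (n : nat) (f : vec R n -> vec R n).
Hypothesis fpos : forall x, vpos x -> vpos (f x).
Hypothesis fmono : order_preserving f.
Hypothesis fhom : homogeneous f.

Definition gg (u : vec R n) : vec R n := fun i => ln (f (fun j => expR (u j)) i).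

Lemma Epos (u : vec R n) : vpos (fun j => expR (u j)).
Proof. by move=> j; exact: expR_gt0. Qed.

Lemma gg_mono (u v : vec R n) : (forall i, u i <= v i) -> forall i, gg u i <= gg v i.
Proof.
move=> h i; rewrite /gg lnlt; try exact: fpos (Epos _) i.
by apply: fmono; [exact: Epos | exact: Epos | move=> j; rewrite ler_expR].
Qed.

Lemma gg_trans (u : vec R n) c : gg (fun i => u i + c) = (fun i => gg u i + c).
Proof.
apply/funext => i; rewrite /gg /=.
have -> : (fun j => expR (u j + c)) = (fun j => expR c * expR (u j)).
  by apply/funext => j; rewrite expRD mulrC.
have hp : 0 < f (fun j => expR (u j)) i by exact: fpos (Epos _) i.
by rewrite (fhom (expR_gt0 c) (Epos u)) lnM ?posrE ?expR_gt0 // expRK addrC.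
Qed.

Lemma Eln (x : vec R n) : vpos x -> (fun j => expR (ln (x j))) = x.
Proof. by move=> hx; apply/funext => j; rewrite lnK // posrE. Qed.

Definition MM (x : vec R n) := vmax (fun i => f x i / x i).
Definition mm (x : vec R n) := vmin (fun i => f x i / x i).

Lemma ratio_pos x : vpos x -> forall i, 0 < f x i / x i.
Proof. by move=> hx i; apply: divr_gt0; [exact: fpos | exact: hx]. Qed.

Lemma MM_pos x : vpos x -> 0 < MM x.
Proof. by move=> hx; rewrite /MM; have [i ->] := vmax_ex (fun i => f x i / x i); exact: ratio_pos. Qed.

Lemma mm_pos x : vpos x -> 0 < mm x.
Proof. by move=> hx; rewrite /mm; have [i ->] := vmin_ex (fun i => f x i / x i); exact: ratio_pos. Qed.

Definition one : vec R n := fun _ => 1.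
Lemma one_pos : vpos one. Proof. by move=> i; rewrite /one ltr01. Qed.

Lemma MM_lb x : vpos x -> vmin (f one) <= MM x.
Proof.
move=> hx; have [k hk] := vmin_ex x.
have xk := hx k.
pose x' := fun i => (x k)^-1 * x i.
have hx' : vpos x' by move=> i; rewrite /x' mulr_gt0 // ?invr_gt0 //; exact: hx.
have le1 : forall i, one i <= x' i.
  move=> i; rewrite /one /x' -(mulVf (lt0r_neq0 xk)) ler_wpM2l //.
    by rewrite invr_ge0 ltW.
  by rewrite -hk vmin_le.
have := fmono one_pos hx' le1 k.
rewrite /x' (fhom (t:=(x k)^-1)) ?invr_gt0 // => h.
apply: le_trans (vmin_le _ k) _; apply: le_trans h _.
by rewrite mulrC; exact: (vmax_ge (fun i => f x i / x i)).
Qed.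

Lemma mm_ub x : vpos x -> mm x <= vmax (f one).
Proof.
move=> hx; have [k hk] := vmax_ex x.
have xk := hx k.
pose x' := fun i => (x k)^-1 * x i.
have hx' : vpos x' by move=> i; rewrite /x' mulr_gt0 // ?invr_gt0 //; exact: hx.
have le1 : forall i, x' i <= one i.
  move=> i; rewrite /one /x' -(mulVf (lt0r_neq0 xk)) ler_wpM2l //.
    by rewrite invr_ge0 ltW.
  by rewrite -hk vmax_ge.
have := fmono hx' one_pos le1 k.
rewrite /x' (fhom (t:=(x k)^-1)) ?invr_gt0 // => h.
apply: le_trans _ (vmax_ge _ k); apply: le_trans _ h.
by rewrite mulrC; exact: (vmin_le (fun i => f x i / x i)).
Qed.


Lemma dH_lb x : vpos x -> ln (MM x) - ln (mm x) <= dH x (f x).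
Proof.
move=> hx.
have [i hi] := vmax_ex (fun i => f x i / x i).
have [j hj] := vmin_ex (fun i => f x i / x i).
have xi := hx i; have xj := hx j; have fxi := fpos hx i; have fxj := fpos hx j.
have T : (f x i * x j) / (x i * f x j) = MM x / mm x.
  rewrite /MM /mm hi hj; field.
  by rewrite !lt0r_neq0.
have Mp := MM_pos hx; have mp := mm_pos hx.
have hpos : 0 < MM x / mm x by rewrite divr_gt0.
have le : MM x / mm x <= vmax (fun i => vmax (fun j => (f x i * x j) / (x i * f x j))).
  apply: le_trans (vmax_ge _ i); rewrite -T.
  exact: (vmax_ge (fun j => (f x i * x j) / (x i * f x j)) j).
have e : ln (MM x / mm x) = ln (MM x) - ln (mm x).
  by rewrite lnM ?posrE ?invr_gt0 // lnV ?posrE.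
rewrite -e /dH lnlt //; exact: lt_le_trans hpos le.
Qed.

Lemma vmin_one_pos : 0 < vmin (f one).
Proof. by have [k ->] := vmin_ex (f one); exact: fpos one_pos k. Qed.

Lemma main_eq : delta f = ln (cw_upper f) - ln (cw_lower f).
Proof.
have hlbM : has_lbound [set vmax (fun i => f x i / x i) | x in @vpos R n].
  by exists (vmin (f one)) => y [x hx <-]; exact: MM_lb hx.
have hinf : has_inf [set vmax (fun i => f x i / x i) | x in @vpos R n].
  by split => //; exists (MM one), one => //; exact: one_pos.
have r_lb : forall x, vpos x -> cw_upper f <= MM x.
  by move=> x hx; apply: ge_inf => //; exists x.
have r_pos : 0 < cw_upper f.
  apply: lt_le_trans vmin_one_pos _; apply: lb_le_inf; first by case: hinf.
  by move=> y [x hx <-]; exact: MM_lb hx.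
have hubm : has_ubound [set vmin (fun i => f x i / x i) | x in @vpos R n].
  by exists (vmax (f one)) => y [x hx <-]; exact: mm_ub hx.
have hsup : has_sup [set vmin (fun i => f x i / x i) | x in @vpos R n].
  by split => //; exists (mm one), one => //; exact: one_pos.
have l_ub : forall x, vpos x -> mm x <= cw_lower f.
  by move=> x hx; apply: ub_le_sup => //; exists x.
have l_pos : 0 < cw_lower f.
  by apply: lt_le_trans (mm_pos one_pos) (l_ub _ one_pos).
have D_lb : lbound [set dH x (f x) | x in @vpos R n] (ln (cw_upper f) - ln (cw_lower f)).
  move=> y [x hx <-]; apply: le_trans (dH_lb hx).
  have := r_lb x hx; rewrite -(lnlt r_pos (MM_pos hx)) => h1.
  have := l_ub x hx; rewrite -(lnlt (mm_pos hx) l_pos) => h2.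
  lra.
apply/le_anti/andP; split; last first.
  apply: lb_le_inf => //; exists (dH one (f one)), one => //; exact: one_pos.
apply/ler_addgt0Pr => eta eta0.
set r := cw_upper f; set l := cw_lower f.
have e4 : 0 < eta / 4 by rewrite divr_gt0.
have eps1 : 0 < r * (expR (eta / 4) - 1).
  by rewrite mulr_gt0 // subr_gt0 expR_gt1.
have [_ [x0 hx0 <-] hlt] := inf_adherent eps1 hinf.
have eps2 : 0 < l * (1 - expR (- (eta / 4))).
  rewrite mulr_gt0 // subr_gt0 expR_lt1; lra.
have [_ [y0 hy0 <-] hgt] := sup_adherent eps2 hsup.
have {hgt} hgt : l - l * (1 - expR (- (eta / 4))) < mm y0 := hgt.
have {hlt} hlt : MM x0 < r + r * (expR (eta / 4) - 1) := hlt.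
have Mx0 := MM_pos hx0; have my0 := mm_pos hy0.
have hA : ln (MM x0) <= ln r + eta / 4.
  have : MM x0 <= r * expR (eta / 4).
    have : r + r * (expR (eta / 4) - 1) = r * expR (eta / 4) by ring.
    lra.
  rewrite -lnlt ?mulr_gt0 ?expR_gt0 // lnM ?posrE ?expR_gt0 // expRK.
  by [].
have hB : ln l - eta / 4 <= ln (mm y0).
  have : l * expR (- (eta / 4)) <= mm y0.
    have : l - l * (1 - expR (- (eta / 4))) = l * expR (- (eta / 4)) by ring.
    lra.
  rewrite -lnlt ?mulr_gt0 ?expR_gt0 // lnM ?posrE ?expR_gt0 // expRK.
  by [].
have hu : forall i, gg (fun i => ln (x0 i)) i <= ln (x0 i) + ln (MM x0).
  move=> i; rewrite /gg Eln //.
  have xi := hx0 i; have fxi := fpos hx0 i.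
  rewrite -lnM ?posrE // lnlt ?mulr_gt0 //.
  have := vmax_ge (fun i => f x0 i / x0 i) i; rewrite -/(MM x0) => h.
  have -> : f x0 i = x0 i * (f x0 i / x0 i) by rewrite mulrC divfK // lt0r_neq0.
  by rewrite ler_wpM2l // ltW.
have hv : forall i, ln (y0 i) + ln (mm y0) <= gg (fun i => ln (y0 i)) i.
  move=> i; rewrite /gg Eln //.
  have yi := hy0 i; have fyi := fpos hy0 i.
  rewrite -lnM ?posrE // lnlt ?mulr_gt0 //.
  have := vmin_le (fun i => f y0 i / y0 i) i; rewrite -/(mm y0) => h.
  have -> : f y0 i = y0 i * (f y0 i / y0 i) by rewrite mulrC divfK // lt0r_neq0.
  by rewrite ler_wpM2l // ltW.
have e2 : 0 < eta / 2 by rewrite divr_gt0.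
have [w hw] := additive_main gg_mono gg_trans e2 hu hv.
pose z := fun i => expR (w i).
have zpos : vpos z by exact: Epos.
have fz : forall i, f z i = expR (gg w i).
  by move=> i; rewrite /gg lnK // posrE; exact: fpos zpos i.
have Tij : forall i j, (f z i * z j) / (z i * f z j) =
    expR ((gg w i - w i) - (gg w j - w j)).
  by move=> i j; rewrite !fz /z expfrac; congr expR; ring.
have hd : dH z (f z) <= ln (MM x0) - ln (mm y0) + eta / 2.
  rewrite /dH -[X in _ <= X]expRK lnlt ?expR_gt0 //; last first.
    have [i ->] := vmax_ex (fun i => vmax (fun j => (f z i * z j) / (z i * f z j))).
    have [j ->] := vmax_ex (fun j => (f z i * z j) / (z i * f z j)).
    by rewrite Tij expR_gt0.
  apply: vmax_le => i; apply: vmax_le => j.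
  by rewrite Tij ler_expR; exact: hw.
have hdel : delta f <= dH z (f z).
  by apply: ge_inf; [exists (ln r - ln l) | exists z].
lra.
Qed.

End Main.

End Aux.

Theorem lemma2p6 (R : realType) (n : nat) (f : vec R n -> vec R n)
  (fpos : forall x, vpos x -> vpos (f x))
  (fmono : order_preserving f) (fhom : homogeneous f) :
  delta f = ln (cw_upper f) - ln (cw_lower f).
Proof. exact: (@Aux.main_eq R n f fpos fmono fhom). Qed.
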